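(* Let $\mathcal C$ be a concept hierarchy, $r_1,r_2,\epsilon\in[0,1]$, $a>0$ a real with $r_1\le ar_2(1-\epsilon)$, $m$ a positive integer, and let $\mathcal A_2$ and $\mathcal L$ be the networks defined below (with $\mathcal L$ having fixed sets $F$ and $E$ satisfying the stated constraints). Then $\mathcal L$ $implements_2$ $\mathcal A_2$: for every $B\subseteq C_0$, in the executions of $\mathcal A_2$ and $\mathcal L$ on input $B$, for every concept $c$, if $rep(c)$ does not fire at time $level(c)$ in $\mathcal A_2$, then no neuron in $reps(c)$ fires at time $level(c)$ in $\mathcal L$.
   Context: Concept hierarchies: fix positive integers $\ell_{max},n,k$. A universal set $D$ of concepts is partitioned into disjoint sets $D_0,\dots,D_{\ell_{max}}$ with $|D_0|=n$; $level(c)=\ell$ for $c\in D_\ell$. A concept hierarchy $\mathcal C$ consists of $C\subseteq D$, with $C_\ell=C\cap D_\ell$, and for each $c\in C_\ell$ with $1\le\ell\le\ell_{max}$ a set $children(c)\subseteq C_{\ell-1}$, such that $|C_{\ell_{max}}|=k$, $|children(c)|=k$ for all such $c$, and $children(c)\cap children(c')=\emptyset$ for distinct $c,c'\in C_\ell$. Common network dynamics: neurons partitioned into layers $N_0,\dots,N_{\ell_{max}}$; threshold $\tau$; weights $w(u,v)\in\{0,1\}$ for $u\in N_{\ell-1}$, $v\in N_\ell$. Failed neurons never fire. A non-failed neuron $v\in N_\ell$, $\ell\ge1$, does not fire at time 0 and fires at time $t\ge1$ iff $\sum_{u\in N_{\ell-1}}w(u,v)x_u(t-1)\ge\tau$,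 where $x_u(s)\in\{0,1\}$ indicates whether $u$ fires at time $s$. $\mathcal A_2$: no failures; each $c\in D_0$ has $rep(c)\in N_0$, each $c\in C$ with $level(c)\ge1$ has $rep(c)\in N_{level(c)}$, all distinct; $w(u,v)=1$ iff $v=rep(c)$, $u=rep(c')$ for a child $c'$ of $c$, else $0$; $\tau=r_1k$. Input $B\subseteq C_0$: the layer-0 neurons $rep(b)$, $b\in B$, fire at time 0, no other layer-0 neuron fires at time 0, and no layer-0 neuron fires at any other time. $\mathcal L$: each $c\in D_0$ has a set $reps(c)$ of $m$ neurons in $N_0$, each $c\in C$ with $level(c)\ge1$ a set $reps(c)$ of $m$ neurons in $N_{level(c)}$, all pairwise disjoint. $E$ is a set of pairs $(u,v)$ with $v\in reps(c)$ and $u\in reps(c')$ for some child $c'$ of $c$; $w(u,v)=1$ iff $(u,v)\in E$, else $0$. Threshold $\tau=ar_2km(1-\epsilon)$. A fixed set $F$ of neurons is failed. Constraints: for every concept $c$, at least $m(1-\epsilon)$ neurons of $reps(c)$ are not in $F$; and for every $c$ with $level(c)\ge1$, every $v\in reps(c)$ and every child $c'$ of $c$, there are at least $am(1-\epsilon)$ neurons $u\in reps(c')\setminus F$ with $(u,v)\in E$. Input $B\subseteq C_0$: a layer-0 neuron fires at time 0 iff it is in $\bigcup_{b\in B}reps(b)\setminus F$, and no layer-0 neuron fires at any other time. *)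

(* Defs.v *)
From HB Require Import structures.
From mathcomp Require Import all_boot all_order all_algebra.
From mathcomp Require Import reals.
Set Implicit Arguments. Unset Strict Implicit. Unset Printing Implicit Defensive.
Import Order.TTheory GRing.Theory Num.Theory.
Local Open Scope ring_scope.

(* The universal set D of concepts is a finite type; [level c] is the index
   of the block D_l of the partition containing c (with level c <= lmax and
   |D_0| = n imposed as hypotheses of the theorem). *)
Definition concept_hierarchy (D : finType) (lmax k : nat) (level : D -> nat)
    (C : {set D}) (children : D -> {set D}) : Prop :=
  [/\ #|[set c in C | level c == lmax]| = k,
      (forall c, c \in C -> (1 <= level c)%N ->
         children c \subset [set c' in C | level c' == (level c).-1]),
      (forall c, c \in C -> (1 <= level c)%N -> #|children c| = k) &
      (forall c c', c \in C -> c' \in C -> (1 <= level c)%N ->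
         level c = level c' -> c != c' -> [disjoint children c & children c'])].

Definition has_rep (D : finType) (level : D -> nat) (C : {set D}) (c : D) : bool :=
  (level c == 0%N) || (c \in C).

(* Layer-0 neurons never fire at times >= 1. *)
Definition net_step (R : realType) (N : finType) (layer : N -> nat)
    (w : N -> N -> R) (tau : R) (F : {set N}) (x : N -> bool) : N -> bool :=
  fun v => [&& (0 < layer v)%N, v \notin F &
            tau <= \sum_(u : N | layer u == (layer v).-1) w u v * (x u)%:R].

Fixpoint fires (R : realType) (N : finType) (layer : N -> nat)
    (w : N -> N -> R) (tau : R) (F : {set N}) (x0 : N -> bool) (t : nat)
    : N -> bool :=
  match t with
  | 0 => fun v => (layer v == 0%N) && x0 v
  | t'.+1 => net_step layer w tau F (fires layer w tau F x0 t')
  end.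

Definition A2_weight (R : realType) (D N : finType) (level : D -> nat)
    (C : {set D}) (children : D -> {set D}) (rep : D -> N) (u v : N) : R :=
  ([exists c, exists c', [&& c \in C, (1 <= level c)%N, c' \in children c,
                            v == rep c & u == rep c']])%:R.

Definition A2_input (D N : finType) (rep : D -> N) (B : {set D}) (v : N) : bool :=
  [exists b in B, v == rep b].

Definition L_weight (R : realType) (N : finType) (E : rel N) (u v : N) : R :=
  (E u v)%:R.

Definition L_input (D N : finType) (reps : D -> {set N}) (F : {set N})
    (B : {set D}) (v : N) : bool :=
  [exists b in B, v \in reps b] && (v \notin F).

(* Main.v *)
Require Import Defs.
From HB Require Import structures.
From mathcomp Require Import all_boot all_order all_algebra.
From mathcomp Require Import reals.
Import Order.TTheory GRing.Theory Num.Theory.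
Local Open Scope ring_scope.


Lemma card_bigcup_le (I T : finType) (S : {set I}) (A : I -> {set T}) :
  (#|\bigcup_(i in S) A i| <= \sum_(i in S) #|A i|)%N.
Proof.
apply: (big_ind2 (fun (X : {set T}) n => #|X| <= n)%N).
- by rewrite cards0.
- move=> X n Y p h1 h2; rewrite cardsU.
  apply: leq_trans (leq_subr _ _) _; exact: leq_add.
- by [].
Qed.

Lemma sum_bool_prod (R : realType) (T : finType) (P b1 b2 : pred T) :
  \sum_(u | P u) ((b1 u)%:R * (b2 u)%:R : R) = (#|[set u | P u && b1 u && b2 u]|)%:R.
Proof.
rewrite -sum1dep_card natr_sum big_mkcond [RHS]big_mkcond /=.
apply: eq_bigr => u _; by case: (P u); case: (b1 u); case: (b2 u); rewrite /= ?mulr0 ?mul0r ?mulr1.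
Qed.

Theorem theorem8p3
  (R : realType)
  (* concept hierarchy *)
  (lmax n k : nat) (lmax_pos : (0 < lmax)%N) (n_pos : (0 < n)%N) (k_pos : (0 < k)%N)
  (D : finType) (level : D -> nat)
  (level_le : forall c, (level c <= lmax)%N)
  (card_D0 : #|[set c | level c == 0%N]| = n)
  (C : {set D}) (children : D -> {set D})
  (hC : concept_hierarchy lmax k level C children)
  (* parameters *)
  (r1 r2 eps a : R)
  (r1_01 : 0 <= r1 <= 1) (r2_01 : 0 <= r2 <= 1) (eps_01 : 0 <= eps <= 1)
  (a_pos : 0 < a) (hr1 : r1 <= a * r2 * (1 - eps))
  (m : nat) (m_pos : (0 < m)%N)
  (* network A_2 *)
  (N2 : finType) (layer2 : N2 -> nat) (layer2_le : forall v, (layer2 v <= lmax)%N)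
  (rep : D -> N2)
  (rep_layer : forall c, has_rep level C c -> layer2 (rep c) = level c)
  (rep_inj : forall c c', has_rep level C c -> has_rep level C c' ->
               rep c = rep c' -> c = c')
  (* network L *)
  (NL : finType) (layerL : NL -> nat) (layerL_le : forall v, (layerL v <= lmax)%N)
  (reps : D -> {set NL})
  (reps_card : forall c, has_rep level C c -> #|reps c| = m)
  (reps_layer : forall c v, has_rep level C c -> v \in reps c -> layerL v = level c)
  (reps_disj : forall c c', has_rep level C c -> has_rep level C c' -> c != c' ->
               [disjoint reps c & reps c'])
  (E : rel NL)
  (E_ok : forall u v, E u v -> exists c c', [/\ c \in C, (1 <= level c)%N,
             c' \in children c, v \in reps c & u \in reps c'])
  (F : {set NL})
  (F_reps : forall c, has_rep level C c -> m%:R * (1 - eps) <= #|reps c :\: F|%:R)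
  (F_edges : forall c v c', c \in C -> (1 <= level c)%N -> v \in reps c ->
               c' \in children c ->
               a * m%:R * (1 - eps) <= #|[set u in reps c' :\: F | E u v]|%:R) :
  forall B : {set D}, B \subset [set c in C | level c == 0%N] ->
  forall c : D, has_rep level C c ->
    ~~ fires layer2 (A2_weight R level C children rep) (r1 * k%:R) set0
         (A2_input rep B) (level c) (rep c) ->
    forall v, v \in reps c ->
      ~~ fires layerL (L_weight R E) (a * r2 * k%:R * m%:R * (1 - eps)) F
           (L_input reps F B) (level c) v.
Proof.
move=> B HB.
have [Hcard Hch Hchk Hdisj] := hC.
have hasC : forall c, c \in C -> has_rep level C c by move=> c0 h; rewrite /has_rep h orbT.
suff H : forall t c, has_rep level C c -> level c = t ->
    ~~ fires layer2 (A2_weight R level C children rep) (r1 * k%:R) set0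
         (A2_input rep B) t (rep c) ->
    forall v, v \in reps c ->
      ~~ fires layerL (L_weight R E) (a * r2 * k%:R * m%:R * (1 - eps)) F
           (L_input reps F B) t v.
  by move=> c hc; apply: H.
elim=> [|t IH] c hc lc nA v vc.
- rewrite /= rep_layer // lc /= in nA.
  apply/negP => /andP [_ /andP [/existsP [b /andP [bB vb]] _]].
  have hb : has_rep level C b.
    by move/subsetP: HB => /(_ b bB); rewrite inE => /andP [h _]; apply: hasC.
  case: (eqVneq c b) => [eb|ne].
  + subst b; apply: (negP nA); apply/existsP; exists c; by rewrite bB eqxx.
  + have := reps_disj _ _ hc hb ne; move/disjointFr/(_ vc); by rewrite vb.
- have cC : c \in C by move: hc; rewrite /has_rep lc.
  have lc1 : (1 <= level c)%N by rewrite lc.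
  rewrite /= /net_step rep_layer // lc in_set0 /= -ltNge in nA.
  rewrite /= /net_step (reps_layer c v hc vc) lc.
  set xA := fires _ _ _ _ _ t in nA.
  set xL := fires _ _ _ _ _ t.
  set S := [set c' in children c | xA (rep c')].
  have chP : forall c', c' \in children c -> c' \in C /\ level c' = t.
    move=> c' h; move/subsetP: (Hch c cC lc1) => /(_ c' h); rewrite inE lc /=.
    by case/andP => h1 /eqP.
  have cardA : (#|S| <= #|[set u | (layer2 u == t) &&
       [exists c0, exists c', [&& c0 \in C, (1 <= level c0)%N, c' \in children c0,
                            rep c == rep c0 & u == rep c']] && xA u]|)%N.
    rewrite -(card_in_imset (f := rep) (D := mem S)).
      apply: subset_leq_card; apply/subsetP => u /imsetP [c' c'S ->].
      move: c'S; rewrite !inE => /andP [c'ch xc'].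
      have [c'C lc'] := chP c' c'ch.
      rewrite rep_layer ?hasC // lc' eqxx xc' andbT /=.
      apply/existsP; exists c; apply/existsP; exists c'; by rewrite cC lc1 c'ch !eqxx.
    move=> x y; rewrite !inE => /andP [xc _] /andP [yc _].
    apply: (rep_inj x y); apply: hasC; [exact: (chP x xc).1 | exact: (chP y yc).1].
  rewrite /A2_weight sum_bool_prod in nA.
  have cardL : (#|[set u | (layerL u == t) && E u v && xL u]| <= #|S| * m)%N.
    apply: (@leq_trans #|\bigcup_(i in S) reps i|).
    - apply: subset_leq_card; apply/subsetP => u; rewrite inE => /andP [/andP [_ Euv] xu].
      have [c0 [c'' [c0C lc0 c''ch vc0 uc'']]] := E_ok _ _ Euv.
      have e0 : c0 = c.
        apply/eqP; apply/negPn/negP => ne.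
        have := reps_disj _ _ (hasC _ c0C) hc ne; move/disjointFr/(_ vc0); by rewrite vc.
      subst c0.
      have [c''C lc''] := chP c'' c''ch.
      apply/bigcupP; exists c'' => //.
      rewrite inE c''ch /=; apply/negPn/negP => nx.
      have := IH c'' (hasC _ c''C) lc'' nx u uc''; by move/negP; apply.
    - apply: leq_trans (card_bigcup_le _ _ S reps) _.
      rewrite (eq_bigr (fun _ => m)); first by rewrite sum_nat_const.
      move=> c'' /=; rewrite inE => /andP [h _]; apply: reps_card; apply: hasC.
      exact: (chP c'' h).1.
  apply/negP => /and3P [_ _ h].
  move: h; rewrite /L_weight sum_bool_prod => h.
  have h1 : (#|S|%:R : R) < r1 * k%:R.
    apply: le_lt_trans nA; by rewrite ler_nat.
  have h2 : (#|[set u | (layerL u == t) && E u v && xL u]|%:R : R) <= #|S|%:R * m%:R.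
    by rewrite -natrM ler_nat.
  have hm : (0 : R) < m%:R by rewrite ltr0n.
  have hk : (0 : R) <= k%:R by rewrite ler0n.
  have h3 : r1 * k%:R <= a * r2 * (1 - eps) * k%:R by rewrite ler_wpM2r.
  have h4 : (#|S|%:R : R) * m%:R < a * r2 * (1 - eps) * k%:R * m%:R.
    by rewrite ltr_pM2r //; apply: lt_le_trans h3.
  have e : a * r2 * (1 - eps) * k%:R * m%:R = a * r2 * k%:R * m%:R * (1 - eps).
    by rewrite -!mulrA; congr (_ * _); congr (_ * _); rewrite mulrC -mulrA.
  have := le_lt_trans h (le_lt_trans h2 h4).
  by rewrite e ltxx.
Qed.
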